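(* Let $p$ be an odd prime and $G$ a finite non-abelian $p$-group. If $C_G(\Phi(G))\not\leq\Phi(G)$, then $G$ has a non-inner automorphism of order $p$.
   Context: $\Phi(G)$ is the Frattini subgroup of $G$ and $C_G(\cdot)$ denotes the centralizer. *)

(* Defs.v *)
From mathcomp Require Import all_boot all_fingroup all_solvable.
Set Implicit Arguments.
Unset Strict Implicit.
Unset Printing Implicit Defensive.
Local Open Scope group_scope.

Definition inner_aut (gT : finGroupType) (G : {set gT}) (a : {perm gT}) : Prop :=
  exists2 g, g \in G & forall x, x \in G -> a x = x ^ g.

(* Main.v *)
Require Import Defs.
From mathcomp Require Import all_boot all_fingroup all_solvable.
Set Implicit Arguments.
Unset Strict Implicit.
Unset Printing Implicit Defensive.
Local Open Scope group_scope.

Lemma conj_comm (gT : finGroupType) (x y : gT) : commute x y -> x ^ y = x.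
Proof. by move=> cxy; apply/conjg_fixP/commgP. Qed.

Section Build.
Variables (gT : finGroupType) (G M : {group gT}) (p : nat) (g u : gT).
Hypotheses (pr_p : prime p) (nMG : M <| G) (iMG : #|G : M| = p)
  (Gg : g \in G) (nMg : g \notin M) (Mu : u \in M) (cMu : M \subset 'C[u])
  (up : u ^+ p = 1) (pw : (g * u) ^+ p = g ^+ p).

Let sMG : M \subset G := normal_sub nMG.
Let nM : G \subset 'N(M) := normal_norm nMG.
Let Gu : u \in G := subsetP sMG u Mu.
Let NM x : x \in G -> x \in 'N(M) := fun Gx => subsetP nM x Gx.

Lemma ocg : #[coset M g] = p.
Proof.
apply/(prime_nt_dvdP pr_p).
  rewrite order_eq1; apply: contra nMg => /eqP h.
  exact: coset_idr (NM Gg) h.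
rewrite -iMG -card_quotient //; exact: order_dvdG (mem_quotient _ Gg).
Qed.

Lemma gX_M j : g ^+ j \in M -> p %| j.
Proof.
move=> h; rewrite -ocg order_dvdn -morphX ?NM //.
by apply/eqP; apply: coset_id.
Qed.

Lemma decomp x : x \in G -> exists2 i, i < p & x * (g ^+ i)^-1 \in M.
Proof.
move=> Gx.
have cycG : <[coset M g]> = (G / M)%g.
  apply/eqP; rewrite eqEcard cycle_subG mem_quotient //=.
  by rewrite -orderE ocg card_quotient // iMG.
have : coset M x \in <[coset M g]> by rewrite cycG mem_quotient.
case/cyclePmin => i; rewrite ocg => lti hx; exists i => //.
apply: coset_idr; first by rewrite NM // groupM ?groupV ?groupX.
by rewrite morphM ?morphV ?morphX ?NM ?groupV ?groupX // -hx mulgV.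
Qed.

Lemma powpow j : p %| j -> (g * u) ^+ j = g ^+ j.
Proof. by move=> /divnK <-; rewrite mulnC !expgM pw. Qed.

Lemma conjgu n k : n \in M -> n ^ (g * u) ^+ k = n ^ g ^+ k.
Proof.
move=> Mn; elim: k => [|k IH]; first by rewrite !expg0.
rewrite expgSr conjgM IH [in RHS]expgSr [in RHS]conjgM conjgM conj_comm //.
apply/cent1P; apply: (subsetP cMu).
rewrite memJ_norm; last exact: NM.
rewrite memJ_norm //; apply: NM; exact: groupX.
Qed.

Lemma key m m' i k : m \in M -> m' \in M -> m * g ^+ i = m' * g ^+ k ->
  m * (g * u) ^+ i = m' * (g * u) ^+ k.
Proof.
wlog le_ki : m m' i k / k <= i.
  move=> W Mm Mm' e; case: (leqP k i) => h; first exact: W.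
  by symmetry; apply: W => //; apply: ltnW.
move=> Mm Mm' e.
have ei : i = (i - k) + k by rewrite subnK.
have e2 : m * g ^+ (i - k) = m'.
  by apply: (mulIg (g ^+ k)); rewrite -mulgA -expgD -ei.
have Mg : g ^+ (i - k) \in M.
  have : m^-1 * m' \in M by rewrite groupM ?groupV.
  by rewrite -e2 mulgA mulVg mul1g.
rewrite ei expgD mulgA (powpow (j:=i - k)); [by rewrite e2 | exact: gX_M].
Qed.

Definition kk x := find (fun i => x * (g ^+ i)^-1 \in M) (iota 0 p).
Definition alpha x := if x \in G then (x * (g ^+ kk x)^-1) * (g * u) ^+ kk x else x.

Lemma kkP x : x \in G -> x * (g ^+ kk x)^-1 \in M.
Proof.
move=> Gx; have [i lti hi] := decomp Gx.
have hs : has (fun i => x * (g ^+ i)^-1 \in M) (iota 0 p).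
  by apply/hasP; exists i => //; rewrite mem_iota.
have := nth_find 0 hs; rewrite -/(kk x) nth_iota //.
by rewrite -(size_iota 0 p) -has_find.
Qed.

Lemma alphaE m i : m \in M -> alpha (m * g ^+ i) = m * (g * u) ^+ i.
Proof.
move=> Mm; have Gx : m * g ^+ i \in G by rewrite groupM ?groupX // (subsetP sMG).
rewrite /alpha Gx; apply: key => //; first exact: kkP.
by rewrite mulgKV.
Qed.

Lemma decomp2 x : x \in G -> exists2 m, m \in M & exists i, x = m * g ^+ i.
Proof.
move=> Gx; have [i _ Mm] := decomp Gx.
by exists (x * (g ^+ i)^-1) => //; exists i; rewrite mulgKV.
Qed.

Lemma alphaM : {in G &, {morph alpha : x y / x * y}}.
Proof.
move=> x y Gx Gy.
have [m Mm [i ->]] := decomp2 Gx; have [n Mn [j ->]] := decomp2 Gy.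
pose n' := n ^ (g ^+ i)^-1.
have Mn' : n' \in M by rewrite memJ_norm ?NM ?groupV ?groupX.
have e1 : g ^+ i * n = n' * g ^+ i by rewrite conjgCV.
have e2 : (g * u) ^+ i * n = n' * (g * u) ^+ i.
  rewrite conjgCV; congr (_ * _).
  have : n' ^ (g * u) ^+ i = n by rewrite conjgu // conjgKV.
  by move=> <-; rewrite conjgK.
have exy : m * g ^+ i * (n * g ^+ j) = (m * n') * g ^+ (i + j).
  by rewrite expgD !mulgA -(mulgA m (g ^+ i)) e1 !mulgA.
rewrite exy (alphaE _ (groupM Mm Mn')) (alphaE _ Mm) (alphaE _ Mn).
by rewrite expgD !mulgA -(mulgA m ((g * u) ^+ i)) e2 !mulgA.
Qed.

Canonical alpha_morph := Morphism alphaM.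

Lemma alpha1 m : m \in M -> alpha m = m.
Proof. by move=> Mm; have := alphaE 0 Mm; rewrite !expg0 !mulg1. Qed.

Lemma alphag : alpha g = g * u.
Proof. by have := alphaE 1 (group1 M); rewrite !expg1 !mul1g. Qed.

Lemma alpha_im : alpha_morph @* G = G.
Proof.
apply/eqP; rewrite eqEsubset; apply/andP; split.
  apply/subsetP => y /morphimP[x _ Gx ->].
  have [m Mm [i ->]] := decomp2 Gx; rewrite /= alphaE //.
  by rewrite groupM ?groupX ?groupM // (subsetP sMG).
apply/subsetP => x Gx.
have [m Mm [i ->]] := decomp2 Gx.
have Gm : m \in G := subsetP sMG m Mm.
have Ggu : g * u^-1 \in G by rewrite groupM ?groupV.
apply/morphimP; exists (m * (g * u^-1) ^+ i); rewrite ?inE ?groupM ?groupX //.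
rewrite morphM ?groupX //= morphX //= alpha1 //.
by rewrite morphM ?groupV //= alphag alpha1 ?groupV // mulgK.
Qed.

Lemma alpha_inj : 'injm alpha_morph.
Proof. by rewrite -card_im_injm alpha_im. Qed.

Definition aa := aut alpha_inj alpha_im.

Lemma aaE x : x \in G -> aa x = alpha x.
Proof. exact: autE. Qed.

Lemma Aut_aa : aa \in Aut G.
Proof. exact: Aut_aut. Qed.

Lemma aaX k : (forall m, m \in M -> (aa ^+ k) m = m) /\ (aa ^+ k) g = g * u ^+ k.
Proof.
elim: k => [|k [IH1 IH2]]; first by split=> [m _|]; rewrite expg0 perm1 ?mulg1.
split=> [m Mm|]; rewrite expgSr permM.
  by rewrite IH1 // aaE ?alpha1 // (subsetP sMG).
rewrite IH2 aaE ?groupM ?groupX // alphaM ?groupX //= alphag alpha1 ?groupX //.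
by rewrite -mulgA -expgS.
Qed.

Lemma aaXp : aa ^+ p = 1.
Proof.
have Ab : aa ^+ p \in Aut G by rewrite groupX ?Aut_aa.
apply/permP => x; rewrite perm1.
case: (boolP (x \in G)) => Gx; last exact: (out_Aut Ab Gx).
have [m Mm [i ->]] := decomp2 Gx.
have Gm : m \in G := subsetP sMG m Mm.
have := morphM (autm Ab) Gm (groupX i Gg); rewrite morphX //= !autmE.
have [h1 h2] := aaX p; rewrite (h1 m Mm) h2 up mulg1; exact.
Qed.

Hypothesis NI : forall h, h \in G -> (forall m, m \in M -> m ^ h = m) -> g ^ h != g * u.

Lemma aa_noninner : ~ exists2 h, h \in G & forall x, x \in G -> aa x = x ^ h.
Proof.
case=> h Gh hh.
have cM : forall m, m \in M -> m ^ h = m.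
  by move=> m Mm; rewrite -hh ?(subsetP sMG) // aaE ?alpha1 // (subsetP sMG).
by have := NI Gh cM; rewrite -hh // aaE // alphag eqxx.
Qed.

Lemma build : exists2 a : {perm gT}, a \in Aut G & #[a] = p /\
  ~ exists2 h, h \in G & forall x, x \in G -> a x = x ^ h.
Proof.
exists aa; first exact: Aut_aa.
split; last exact: aa_noninner.
apply/(prime_nt_dvdP pr_p); last by rewrite order_dvdn aaXp.
rewrite order_eq1; apply/eqP => a1; apply: aa_noninner.
by exists 1 => // x _; rewrite a1 perm1 conjg1.
Qed.

End Build.

Lemma index_helper (gT : finGroupType) (K H G : {group gT}) :
  K <| G -> K * H = G -> #|G : H| = #|K : K :&: H|.
Proof.
move=> nKG e.
have sHN : H \subset 'N(K).
  by apply: subset_trans (normal_norm nKG); rewrite -e mulG_subr.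
by rewrite -e -(normC sHN) indexMg indexgI.
Qed.

Section Main.
Variables (gT : finGroupType) (G : {group gT}) (p : nat).
Hypotheses (pr_p : prime p) (odd_p : odd p) (pG : p.-group G).

Definition goal := exists2 a : {perm gT}, a \in Aut G & #[a] = p /\ ~ inner_aut G a.

Lemma derPhi x y : x \in G -> y \in G -> [~ x, y] \in 'Phi(G).
Proof.
move=> Gx Gy; rewrite (Phi_joing pG); apply: (subsetP (joing_subl _ _)).
by rewrite derg1 mem_commg.
Qed.

Lemma powPhi x : x \in G -> x ^+ p \in 'Phi(G).
Proof.
move=> Gx; rewrite (Phi_joing pG); apply: (subsetP (joing_subr _ _)).
by have := Mho_p_elt 1 Gx (mem_p_elt pG Gx); rewrite expn1.
Qed.

Lemma H0 (M K : {group gT}) x : maximal M G -> K \subset G -> M \subset K ->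
  x \in K -> x \notin M -> K :=: G.
Proof.
case/maxgroupP => _ maxM sKG sMK Kx nMx.
apply/eqP; apply: contraR nMx => nKG.
have := maxM K; rewrite properEneq nKG sKG => /(_ isT sMK) <-; exact: Kx.
Qed.

Lemma zcomm x y : x \in 'Z(G) -> y \in G -> commute x y.
Proof. by case/centerP => _ h /h. Qed.

Section Mg.
Variables (M : {group gT}) (g : gT).
Hypotheses (maxM : maximal M G) (Cg : g \in 'C_G('Phi(G))) (nMg : g \notin M).

Let Gg : g \in G := subsetP (subsetIl _ _) g Cg.
Let cgPhi : g \in 'C('Phi(G)) := subsetP (subsetIr _ _) g Cg.
Let nMG : M <| G := p_maximal_normal pG maxM.
Let sMG : M \subset G := normal_sub nMG.
Let sZM : 'Z(M) \subset M := center_sub M.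

Lemma ZMG x : x \in 'Z(M) -> x \in G.
Proof. by move=> /(subsetP sZM) /(subsetP sMG). Qed.

Lemma F1' x : x \in 'Z(M) -> commute x g -> x \in 'Z(G).
Proof.
move=> Zx cxg; have Gx := ZMG Zx.
have sMC : M \subset 'C_G[x].
  rewrite subsetI sMG sub_cent1; by case/setIP: Zx.
have gC : g \in 'C_G[x] by apply/subcent1P; split => //; exact: commute_sym.
have e := H0 maxM (subsetIl _ _) sMC gC nMg.
apply/centerP; split => // y Gy.
have : y \in 'C_G[x] by rewrite e.
by case/subcent1P => _ /commute_sym.
Qed.

Lemma F1 x : x \in 'Z(M) -> x \in 'Phi(G) -> x \in 'Z(G).
Proof. by move=> Zx Px; apply: F1' => //; apply: commute_sym; exact: (centP cgPhi).
Qed.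

Let nZM : 'Z(M) <| G := char_normal_trans (center_char M) nMG.

Lemma F2 x : x \in 'Z(M) -> [~ g, x] \in 'Z(G).
Proof.
move=> Zx; apply: F1; last exact: derPhi Gg (ZMG Zx).
rewrite commgEr groupM // memJ_norm ?groupV //.
exact: (subsetP (normal_norm nZM)).
Qed.

Lemma F2' x : x \in 'Z(M) -> [~ x, g] \in 'Z(G).
Proof. by move=> Zx; rewrite -invgR groupV F2. Qed.

Lemma F3 x : x \in 'Z(M) -> x ^+ p \in 'Z(G).
Proof. by move=> Zx; apply: F1; [rewrite groupX | exact: powPhi (ZMG Zx)]. Qed.

Lemma powZ u : u \in 'Z(M) -> u ^+ p = 1 -> (g * u) ^+ p = g ^+ p.
Proof.
move=> Zu up; have Gu := ZMG Zu; have Zc := F2' Zu.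
have c1 : commute u [~ u, g] by apply: commute_sym; exact: zcomm.
have c2 : commute g [~ u, g] by apply: commute_sym; exact: zcomm.
rewrite expMg_Rmul // up mulg1 bin2odd // expgM -commXg // up comm1g expg1n.
by rewrite mulg1.
Qed.

Lemma typeA u : u \in 'Z(M) -> u ^+ p = 1 -> u \notin 'Phi(G) -> goal.
Proof.
move=> Zu up nPu.
have Mu : u \in M := subsetP sZM u Zu.
have cMu : M \subset 'C[u] by rewrite sub_cent1; case/setIP: Zu.
have NI : forall h, h \in G -> (forall m, m \in M -> m ^ h = m) -> g ^ h != g * u.
  move=> h Gh _; apply/eqP => e; apply: (negP nPu).
  have <- : [~ g, h] = u by rewrite commgEl e mulKg.
  exact: derPhi.
have [a Aa [oa ni]] := build pr_p nMG (p_maximal_index pG maxM) Gg nMg Mu cMu up (powZ Zu up) NI.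
by exists a.
Qed.

Lemma typeB u : 'Z(G) \subset 'Phi(G) -> u \in 'Z(M) -> u ^+ p = 1 ->
  (forall h, h \in 'Z(M) -> [~ g, h] != u) -> goal.
Proof.
move=> ZPhi Zu up hh.
have Mu : u \in M := subsetP sZM u Zu.
have cMu : M \subset 'C[u] by rewrite sub_cent1; case/setIP: Zu.
have NI : forall h, h \in G -> (forall m, m \in M -> m ^ h = m) -> g ^ h != g * u.
  move=> h Gh cM; apply/eqP => e.
  have cMh : forall m, m \in M -> commute m h.
    by move=> m Mm; apply/commgP; apply/conjg_fixP; exact: cM.
  have Mh : h \in M.
    apply: contraT => nMh.
    have sMC : M \subset 'C_G[h].
      by rewrite subsetI sMG; apply/subsetP => m Mm; apply/cent1P; exact: cMh.
    have hC : h \in 'C_G[h] by apply/subcent1P; split.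
    have eC := H0 maxM (subsetIl _ _) sMC hC nMh.
    have Zh : h \in 'Z(G).
      apply/centerP; split => // y Gy.
      have : y \in 'C_G[h] by rewrite eC.
      by case/subcent1P => _ /commute_sym.
    by rewrite (subsetP (Phi_sub_max maxM)) ?(subsetP ZPhi) in nMh.
  have Zh : h \in 'Z(M).
    by apply/centerP; split => // y My; apply: commute_sym; exact: cMh.
  by have := hh h Zh; rewrite commgEl e mulKg eqxx.
have [a Aa [oa ni]] := build pr_p nMG (p_maximal_index pG maxM) Gg nMg Mu cMu up (powZ Zu up) NI.
by exists a.
Qed.

Lemma ZGZM : 'Z(G) \subset 'Phi(G) -> 'Z(G) \subset 'Z(M).
Proof.
move=> ZPhi; apply/subsetP => z Zz; apply/centerP; split.
  exact: (subsetP (Phi_sub_max maxM)) (subsetP ZPhi z Zz).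
by move=> y My; apply: zcomm Zz (subsetP sMG y My).
Qed.

Lemma count : 'Z(G) \subset 'Phi(G) ->
  (forall u, u \in 'Z(M) -> u ^+ p = 1 -> u \in 'Phi(G)) ->
  (forall u, u \in 'Z(M) -> u ^+ p = 1 -> exists2 h, h \in 'Z(M) & [~ g, h] = u) ->
  forall z, z \in 'Z(G) -> exists2 b, b \in 'Z(M) & b ^+ p = z.
Proof.
move=> ZPhi nA nB.
have sZGZM := ZGZM ZPhi.
have cZM : forall x y, x \in 'Z(M) -> y \in 'Z(M) -> commute x y.
  by move=> x y /centerP[_ h] /(subsetP sZM) /h.
have ZG x : x \in 'Z(G) -> x \in G by move/(subsetP (center_sub G)).
have fM : {in 'Z(M) &, {morph (fun h => [~ g, h]) : x y / x * y}}.
  move=> x y Zx Zy /=; rewrite commgMJ conj_comm; last exact: zcomm (F2 Zx) (ZMG Zy).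
  exact: zcomm (F2 Zy) (ZG _ (F2 Zx)).
have qM : {in 'Z(M) &, {morph (fun h => h ^+ p) : x y / x * y}}.
  by move=> x y Zx Zy /=; rewrite expgMn //; exact: cZM.
pose f := Morphism fM; pose q := Morphism qM.
have kD (y : gT) (r : {morphism 'Z(M) >-> gT}) : y \in 'ker r -> y \in 'Z(M).
  by move/(subsetP (normal_sub (ker_normal r))).
have kf : 'ker f = 'Z(G).
  apply/setP => x; apply/idP/idP.
    move=> kx; have Zx := kD _ _ kx; have := (kerP f Zx) kx => /= e.
    apply: F1' Zx _; apply: commute_sym; apply/commgP; by rewrite e.
  move=> Zx; have ZMx := subsetP sZGZM x Zx; apply/(kerP f ZMx) => /=.
  apply/eqP/commgP; exact: commute_sym (zcomm Zx Gg).
have imf : f @* 'Z(M) = 'ker q.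
  apply/setP => y; apply/idP/idP.
    case/morphimP => x _ Zx -> /=.
    have Zy := subsetP sZGZM _ (F2 Zx).
    apply/(kerP q Zy) => /=.
    rewrite -commgX; last exact: commute_sym (zcomm (F2 Zx) (ZMG Zx)).
    apply/eqP/commgP; exact: commute_sym (zcomm (F3 Zx) Gg).
  move=> ky; have Zy := kD _ _ ky; have yp := (kerP q Zy) ky.
  have [h Zh e] := nB y Zy yp.
  by apply/morphimP; exists h => //; rewrite -e.
have c1 : #|'Z(M)| = (#|'Z(G)| * #|'ker q|)%N.
  by rewrite -imf card_morphim setIid kf Lagrange.
have c2 : #|'Z(M)| = (#|'ker q| * #|q @* 'Z(M)|)%N.
  by rewrite card_morphim setIid Lagrange // (normal_sub (ker_normal q)).
have c3 : #|q @* 'Z(M)| = #|'Z(G)|.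
  apply/eqP; rewrite -(eqn_pmul2l (cardG_gt0 ('ker q)%G)) /= -c2 c1 mulnC //.
have sq : q @* 'Z(M) \subset 'Z(G).
  by apply/subsetP => y /morphimP[x _ Zx ->]; exact: F3 Zx.
have eq : q @* 'Z(M) = 'Z(G) by apply/eqP; rewrite eqEcard sq c3 leqnn.
move=> z Zz; have : z \in q @* 'Z(M) by rewrite eq.
by case/morphimP => b _ Zb ->; exists b.
Qed.

End Mg.
Lemma exmax x : x \in G -> x \notin 'Phi(G) ->
  exists2 M : {group gT}, maximal M G & x \notin M.
Proof.
move=> Gx nPx.
case: (boolP [exists M : {group gT}, maximal M G && (x \notin M)]).
  by case/existsP => M /andP[]; exists M.
move/existsPn => H; case/negP: nPx; apply/bigcapP => M /orP[/eqP -> // | maxM].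
by have := H M; rewrite maxM /= negbK.
Qed.

Lemma caseI : ~~ abelian G -> ~~ ('Z(G) \subset 'Phi(G)) -> goal.
Proof.
move=> nab /subsetPn[z Zz nPz].
have Gz : z \in G := subsetP (center_sub G) z Zz.
have [M maxM nMz] := exmax Gz nPz.
have nMG := p_maximal_normal pG maxM; have sMG := normal_sub nMG.
have iMG := p_maximal_index pG maxM.
have pM : p.-group M := pgroupS sMG pG.
have ntM : M :!=: 1.
  apply/eqP => M1; case/negP: nab; apply: cyclic_abelian; apply: prime_cyclic.
  by rewrite -(Lagrange sMG) iMG M1 cards1 mul1n.
have ntZ : 'Z(M) != 1 by rewrite (center_nil_eq1 (pgroup_nil pM)).
have [_ pZ _] := pgroup_pdiv (pgroupS (center_sub M) pM) ntZ.
have [u Zu ou] := Cauchy pr_p pZ.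
have up : u ^+ p = 1 by rewrite -ou expg_order.
have Mu : u \in M := subsetP (center_sub M) u Zu.
have Gu : u \in G := subsetP sMG u Mu.
have cMu : M \subset 'C[u] by rewrite sub_cent1; case/setIP: Zu.
have pw : (z * u) ^+ p = z ^+ p by rewrite expgMn ?up ?mulg1 //; exact: zcomm.
have NI : forall h, h \in G -> (forall m, m \in M -> m ^ h = m) -> z ^ h != z * u.
  move=> h Gh _; rewrite conj_comm; last exact: zcomm.
  apply/eqP => e; have u1 : u = 1 by apply: (mulgI z); rewrite mulg1.
  by move: ou; rewrite u1 order1 => p1; move: pr_p; rewrite -p1.
have [a Aa [oa ni]] := build pr_p nMG iMG Gz nMz Mu cMu up pw NI.
by exists a.
Qed.

Lemma final : ~~ abelian G -> ~~ ('C_G('Phi(G)) \subset 'Phi(G)) -> goal.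
Proof.
move=> nab hC.
case: (boolP ('Z(G) \subset 'Phi(G))) => ZPhi; last exact: caseI.
have [g Cg nPg] := subsetPn hC.
have Gg : g \in G := subsetP (subsetIl _ _) g Cg.
have cgPhi : g \in 'C('Phi(G)) := subsetP (subsetIr _ _) g Cg.
have [M maxM nMg] := exmax Gg nPg.
have nMG := p_maximal_normal pG maxM; have sMG := normal_sub nMG.
case: (boolP ('Z(M) \subset 'Phi(G))) => ZMPhi.
  have ntG : G :!=: 1 by apply: contraNneq nab => ->; exact: abelian1.
  have ntZ : 'Z(G) != 1 by rewrite (center_nil_eq1 (pgroup_nil pG)).
  have [_ pZ _] := pgroup_pdiv (pgroupS (center_sub G) pG) ntZ.
  have [u Zu ou] := Cauchy pr_p pZ.
  have up : u ^+ p = 1 by rewrite -ou expg_order.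
  apply: (typeB maxM Cg nMg ZPhi (subsetP (ZGZM maxM ZPhi) u Zu) up) => h Zh.
  have -> : [~ g, h] = 1.
    apply/eqP/commgP; exact: (centP cgPhi) (subsetP ZMPhi h Zh).
  apply/eqP => u1; move: ou; rewrite -u1 order1 => p1; move: pr_p; by rewrite -p1.
have [a Za nPa] := subsetPn ZMPhi.
have ZC (K : {group gT}) x : maximal K G -> x \in 'Z(K) -> x \in 'C_G('Phi(G)).
  move=> maxK Zx; have sKG := proper_sub (maxgroupp maxK).
  have Kx := subsetP (center_sub K) x Zx.
  rewrite inE (subsetP sKG x Kx); apply/centP => y Py.
  case/centerP: Zx => _ cx; apply: cx.
  exact: (subsetP (Phi_sub_max maxK)).
have Ca := ZC M a maxM Za.
have Ga : a \in G := subsetP (subsetIl _ _) a Ca.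
have Ma : a \in M := subsetP (center_sub M) a Za.
have [M' maxM' nM'a] := exmax Ga nPa.
have nM'G := p_maximal_normal pG maxM'; have sM'G := normal_sub nM'G.
case: (boolP [exists u in 'Z(M'), (u ^+ p == 1) && (u \notin 'Phi(G))]).
  case/exists_inP => u Zu /andP[/eqP up nPu].
  have := typeA maxM'. move=> /(_ _ Ca). move=> /(_ nM'a). move=> /(_ _ Zu up nPu). done.
move/exists_inPn => nA'.
have nA : forall u, u \in 'Z(M') -> u ^+ p = 1 -> u \in 'Phi(G).
  by move=> u Zu up; have := nA' u Zu; rewrite up eqxx /= negbK.
case: (boolP [exists u in 'Z(M'), (u ^+ p == 1) && [forall h in 'Z(M'), [~ a, h] != u]]).
  case/exists_inP => u Zu /andP[/eqP up /forall_inP hh].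
  have := typeB maxM'. move=> /(_ _ Ca nM'a _ ZPhi Zu up hh). done.
move/exists_inPn => nB'.
have nB : forall u, u \in 'Z(M') -> u ^+ p = 1 -> exists2 h, h \in 'Z(M') & [~ a, h] = u.
  move=> u Zu up; have := nB' u Zu; rewrite up eqxx /= negb_forall_in.
  by case/exists_inP => h Zh; rewrite negbK => /eqP; exists h.
have [b Zb bp] := count maxM' Ca nM'a ZPhi nA nB (F3 maxM Cg nMg Za).
have Mb' : b \in M' := subsetP (center_sub M') b Zb.
have Cb := ZC M' b maxM' Zb.
have Gb : b \in G := subsetP (subsetIl _ _) b Cb.
have cab : [~ b^-1, a] \in 'Z(G).
  have := F2' maxM' Ca nM'a; apply; by rewrite groupV.
have c1 : commute b^-1 [~ b^-1, a] by apply: commute_sym; apply: zcomm cab _; rewrite groupV.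
have c2 : commute a [~ b^-1, a] by apply: commute_sym; apply: zcomm cab _.
have [w ew] : {w | w = a * b^-1} by exists (a * b^-1).
have wp : w ^+ p = 1.
  rewrite ew expMg_Rmul // expgVn bp mulgV mul1g bin2odd // expgM -commXg //.
  rewrite expgVn bp.
  have -> : [~ (a ^+ p)^-1, a] = 1.
    by apply/eqP/commgP; apply: commute_sym; apply: commuteV; apply: commuteX.
  by rewrite expg1n.
have Gw : w \in G by rewrite ew groupM ?groupV.
have nM'w : w \notin M'.
  apply: contra nM'a => M'w; have : w * b \in M' by rewrite groupM.
  by rewrite ew mulgKV.
have nPw : w \notin 'Phi(G).
  by apply: contra nM'w; exact: (subsetP (Phi_sub_max maxM')).
have sNH : M :&: M' \subset 'C_G[w].
  apply/subsetP => y /setIP[My M'y]; apply/subcent1P; split; first exact: (subsetP sMG).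
  rewrite ew; apply: commute_sym; apply: commuteM.
    by apply: commute_sym; case/centerP: Za => _ cx; apply: cx.
  apply: commuteV; apply: commute_sym.
  by case/centerP: Zb => _ cx; apply: cx.
have Hw : w \in 'C_G[w] by apply/subcent1P; split.
have ZwG : ~ ('C_G[w] :=: G).
  move=> e; apply: (negP nPw); apply: (subsetP ZPhi); apply/centerP; split => // y Gy.
  have : y \in 'C_G[w] by rewrite e.
  by case/subcent1P.
have sHG : 'C_G[w] \subset G := subsetIl _ _.
have nHM' : ~~ ('C_G[w] \subset M') by apply/subsetPn; exists w.
have HM'G := mulg_normal_maximal nM'G maxM' sHG nHM'.
have nMM' : ~~ (M \subset M') by apply/subsetPn; exists a.
have MM'G := mulg_normal_maximal nM'G maxM' sMG nMM'.
have iH : #|G : 'C_G[w]| = p.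
  have e1 := index_helper nM'G HM'G.
  have e2 := index_helper nM'G MM'G.
  rewrite (p_maximal_index pG maxM) in e2.
  apply/(prime_nt_dvdP pr_p).
    rewrite indexg_eq1; apply/negP => sGH; apply: ZwG.
    by apply/eqP; rewrite eqEsubset sHG sGH.
  rewrite e1 e2; apply: indexgS; rewrite subsetI subsetIl /= setIC //.
have maxH : maximal 'C_G[w] G by apply: p_index_maximal sHG _; rewrite iH.
have ZHw : w \in 'Z('C_G[w]).
  by apply/centerP; split => // y Hy; case/subcent1P: Hy.
case: (boolP (a \in 'C_G[w])) => aH; last first.
  have := typeA maxH; move=> /(_ _ Ca aH _ ZHw wp nPw). done.
case: (boolP (g \in 'C_G[w])) => gH; last first.
  have := typeA maxH; move=> /(_ _ Cg gH _ ZHw wp nPw). done.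
exfalso; apply: ZwG.
have sMH : M \subset 'C_G[w].
  have nK1 : ~~ (M :&: 'C_G[w] \subset M').
    by apply/subsetPn; exists a => //; rewrite inE Ma aH.
  have K1G := mulg_normal_maximal nM'G maxM' (subset_trans (subsetIl _ _) sMG) nK1.
  have := group_modr M' (subsetIl M 'C_G[w]).
  rewrite K1G (setIidPl sMG) => <-.
  by rewrite mul_subG // subsetIr.
exact: H0 maxM sHG sMH gH nMg.
Qed.

End Main.

Theorem lemma2p4 (gT : finGroupType) (G : {group gT}) (p : nat) :
  prime p -> odd p -> p.-group G -> ~~ abelian G ->
  ~~ ('C_G('Phi(G)) \subset 'Phi(G)) ->
  exists2 a : {perm gT}, a \in Aut G & #[a] = p /\ ~ inner_aut G a.
Proof.
move=> pr_p odd_p pG nab hC; exact: (final pr_p odd_p pG nab hC).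
Qed.
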